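(* Let $K=2$, let $-1<\ell\le u<1$, and for $\rho\in[\ell,u]$ let $M_\rho=\begin{pmatrix}1&\rho\\ \rho&1\end{pmatrix}$. Fix $\alpha\in(0,1)$ and let $c(\rho)$ denote the $1-\alpha$ quantile, $c(\rho)=\inf\{c:\mathbb{P}\{\bar\chi^2(M_\rho^{-1},\Lambda_+)\le c\}\ge1-\alpha\}$. Then $c(\ell)\ge c(\rho)$ for every $\rho\in[\ell,u]$; i.e., the most conservative (largest) $1-\alpha$ quantile over this set of correlation matrices is attained at $\rho=\ell$.
   Context: $\Lambda_+=\{\lambda\in\mathbb{R}^2:\lambda_1\ge0,\lambda_2\ge0,\ \lambda_1+\lambda_2>0\}$. For a positive definite $2\times2$ matrix $V$, the chi-bar-squared distribution $\bar\chi^2(V,\Lambda_+)$ is the law of $X^TV^{-1}X-\inf_{\theta\in\Lambda_+}(X-\theta)^TV^{-1}(X-\theta)$ where $X\sim N_2(0,V)$. *)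

(* Defs.v *)
From Stdlib Require Import Reals Lra ClassicalEpsilon.
Open Scope R_scope.

(* A symmetric 2x2 matrix [[v11, v12]; [v12, v22]]. *)
Record sym2 := Sym2 { m11 : R; m12 : R; m22 : R }.

Definition det2 (V : sym2) : R := m11 V * m22 V - m12 V * m12 V.

Definition posdef2 (V : sym2) : Prop := 0 < m11 V /\ 0 < det2 V.

Definition inv2 (V : sym2) : sym2 :=
  Sym2 (m22 V / det2 V) (- m12 V / det2 V) (m11 V / det2 V).

Definition qform (A : sym2) (x1 x2 : R) : R :=
  m11 A * x1 * x1 + 2 * m12 A * x1 * x2 + m22 A * x2 * x2.

Definition Mrho (rho : R) : sym2 := Sym2 1 rho 1.

Definition LambdaPlus (t1 t2 : R) : Prop := 0 <= t1 /\ 0 <= t2 /\ 0 < t1 + t2.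

Definition is_glb (S : R -> Prop) (m : R) : Prop :=
  (forall x, S x -> m <= x) /\ (forall b, (forall x, S x -> b <= x) -> b <= m).

(* the infimum of a set of reals (chosen by classical epsilon; meaningful
   whenever the glb exists, which is the case below: nonempty, bounded below by 0) *)
Definition Rinf (S : R -> Prop) : R :=
  epsilon (inhabits 0) (fun m => is_glb S m).

Definition chibar_stat (V : sym2) (x1 x2 : R) : R :=
  qform (inv2 V) x1 x2 -
  Rinf (fun s => exists t1 t2, LambdaPlus t1 t2 /\ s = qform (inv2 V) (x1 - t1) (x2 - t2)).

Definition gauss_dens (V : sym2) (x1 x2 : R) : R :=
  / (2 * PI * sqrt (det2 V)) * exp (- qform (inv2 V) x1 x2 / 2).

Definition indic (P : Prop) : R :=
  if excluded_middle_informative P then 1 else 0.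

Definition RInt_is (f : R -> R) (a b v : R) : Prop :=
  exists pr : Riemann_integrable f a b, RiemannInt pr = v.

Definition improper_is (f : R -> R) (v : R) : Prop :=
  forall eps, 0 < eps -> exists N, forall a b, a <= - N -> N <= b ->
    exists w, RInt_is f a b w /\ Rabs (w - v) < eps.

(* P{ chibar^2(V, Lambda_+) <= c } = p, with X ~ N_2(0,V), computed as the
   iterated (improper Riemann) integral of the indicator times the density *)
Definition chibar_cdf (V : sym2) (c p : R) : Prop :=
  exists g : R -> R,
    (forall x1, improper_is
        (fun x2 => indic (chibar_stat V x1 x2 <= c) * gauss_dens V x1 x2) (g x1))
    /\ improper_is g p.

Definition is_quantile (V : sym2) (alpha q : R) : Prop :=
  is_glb (fun c => exists p, chibar_cdf V c p /\ 1 - alpha <= p) q.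

(* Main.v *)
Require Import Defs.
From Stdlib Require Import Reals Lra Psatz ClassicalEpsilon.
From Coquelicot Require Import Coquelicot.
Open Scope R_scope.

Lemma RInt_is_iff f a b w : RInt_is f a b w <-> is_RInt f a b w.
Proof.
  split.
  - intros [pr H]. rewrite <- H, <- RInt_Reals.
    exact (RInt_correct f a b (ex_RInt_Reals_1 _ _ _ pr)).
  - intros H. exists (ex_RInt_Reals_0 _ _ _ (ex_intro _ w H)).
    rewrite <- RInt_Reals. now apply is_RInt_unique.
Qed.

Definition imp (f : R -> R) (v : R) : Prop :=
  forall eps, 0 < eps -> exists N, forall a b, a <= - N -> N <= b ->
    exists w, is_RInt f a b w /\ Rabs (w - v) < eps.

Lemma improper_iff f v : improper_is f v <-> imp f v.
Proof.
  split; intros H eps Heps; destruct (H eps Heps) as [N HN]; exists N;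
  intros a b Ha Hb; destruct (HN a b Ha Hb) as [w [Hw1 Hw2]]; exists w;
  split; auto; apply RInt_is_iff; auto.
Qed.

Lemma imp_ext f g v : (forall x, f x = g x) -> imp f v -> imp g v.
Proof.
  intros E H eps Heps; destruct (H eps Heps) as [N HN]; exists N;
  intros a b Ha Hb; destruct (HN a b Ha Hb) as [w [Hw1 Hw2]]; exists w;
  split; auto. eapply is_RInt_ext; [|exact Hw1]. intros; auto.
Qed.

Lemma imp_shift f v d : imp f v -> imp (fun y => f (y + d)) v.
Proof.
  intros H eps Heps; destruct (H eps Heps) as [N HN]; exists (N + Rabs d).
  intros a b Ha Hb.
  assert (Ha' : a + d <= - N) by (pose proof (Rle_abs d); pose proof (Rle_abs (-d)); rewrite Rabs_Ropp in *; lra).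
  assert (Hb' : N <= b + d) by (pose proof (Rle_abs d); pose proof (Rle_abs (-d)); rewrite Rabs_Ropp in *; lra).
  destruct (HN _ _ Ha' Hb') as [w [Hw1 Hw2]]; exists w; split; auto.
  assert (H1: is_RInt f (1 * a + d) (1 * b + d) w) by (now rewrite !Rmult_1_l).
  apply is_RInt_comp_lin in H1.
  eapply is_RInt_ext; [|exact H1]. intros x _. simpl. unfold scal; simpl.
  unfold mult; simpl. ring_simplify (1 * x + d). ring.
Qed.

Lemma imp_scal_arg f v k : 0 < k -> imp f v -> imp (fun y => k * f (k * y)) v.
Proof.
  intros Hk H eps Heps; destruct (H eps Heps) as [N HN]; exists (Rabs N / k).
  intros a b Ha Hb.
  pose proof (Rle_abs N). pose proof (Rle_abs (-N)); rewrite Rabs_Ropp in *.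
  assert (Ha' : k * a + 0 <= - N).
  { assert (a * k <= - (Rabs N / k) * k) by (apply Rmult_le_compat_r; lra).
    replace (- (Rabs N / k) * k) with (- Rabs N) in H2 by (field; lra). lra. }
  assert (Hb' : N <= k * b + 0).
  { assert ((Rabs N / k) * k <= b * k) by (apply Rmult_le_compat_r; lra).
    replace ((Rabs N / k) * k) with (Rabs N) in H2 by (field; lra). lra. }
  destruct (HN _ _ Ha' Hb') as [w [Hw1 Hw2]]; exists w; split; auto.
  apply is_RInt_comp_lin in Hw1.
  eapply is_RInt_ext; [|exact Hw1]. intros x _. simpl. unfold scal; simpl.
  unfold mult; simpl. now rewrite Rplus_0_r.
Qed.

Lemma imp_scal f v k : imp f v -> imp (fun y => k * f y) (k * v).
Proof.
  intros H eps Heps.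
  destruct (H (eps / (Rabs k + 1))) as [N HN].
  { apply Rdiv_lt_0_compat; auto. pose proof (Rabs_pos k); lra. }
  exists N. intros a b Ha Hb.
  destruct (HN _ _ Ha Hb) as [w [Hw1 Hw2]]; exists (k * w); split.
  - apply (is_RInt_scal _ _ _ k) in Hw1. exact Hw1.
  - replace (k * w - k * v) with (k * (w - v)) by ring. rewrite Rabs_mult.
    pose proof (Rabs_pos k). pose proof (Rabs_pos (w - v)).
    assert (Rabs k * Rabs (w - v) <= (Rabs k + 1) * Rabs (w - v)) by nra.
    assert ((Rabs k + 1) * Rabs (w - v) < (Rabs k + 1) * (eps / (Rabs k + 1))).
    { apply Rmult_lt_compat_l; lra. }
    replace ((Rabs k + 1) * (eps / (Rabs k + 1))) with eps in H3 by (field; lra). lra.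
Qed.

Lemma imp_le f g v w : imp f v -> imp g w -> (forall x, f x <= g x) -> v <= w.
Proof.
  intros Hf Hg Hle. destruct (Rle_or_lt v w) as [|Hlt]; auto. exfalso.
  set (e := (v - w) / 2).
  assert (He : 0 < e) by (unfold e; lra).
  destruct (Hf e He) as [N1 H1]. destruct (Hg e He) as [N2 H2].
  set (M := Rabs N1 + Rabs N2).
  pose proof (Rle_abs N1). pose proof (Rle_abs (-N1)). pose proof (Rle_abs N2). pose proof (Rle_abs (-N2)).
  rewrite Rabs_Ropp in *.
  destruct (H1 (-M) M) as [w1 [A1 B1]]; try (unfold M; lra).
  destruct (H2 (-M) M) as [w2 [A2 B2]]; try (unfold M; lra).
  assert (w1 <= w2).
  { eapply is_RInt_le; [| exact A1 | exact A2 | ]. unfold M; pose proof (Rabs_pos N1); pose proof (Rabs_pos N2); lra.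
    intros; auto. }
  apply Rabs_def2 in B1. apply Rabs_def2 in B2. unfold e in *. lra.
Qed.

Lemma imp_exists f : (forall x, 0 <= f x) -> (forall a b, ex_RInt f a b) ->
  (exists B, forall a b, a <= b -> RInt f a b <= B) -> exists v, imp f v.
Proof.
  intros Hpos Hex [B HB].
  set (E := fun r => exists a b, a <= b /\ r = RInt f a b).
  assert (HbE : bound E) by (exists B; intros r [a [b [Hab ->]]]; auto).
  assert (HnE : exists r, E r) by (exists (RInt f 0 0); exists 0, 0; split; [lra|auto]).
  destruct (completeness E HbE HnE) as [v [Hub Hlub]].
  exists v. intros eps Heps.
  assert (exists r, E r /\ v - eps < r) as [r [[a0 [b0 [Hab0 ->]]] Hr]].
  { apply NNPP. intros Hn. assert (v <= v - eps); [|lra].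
    apply Hlub. intros r Er. destruct (Rle_or_lt r (v - eps)); auto.
    exfalso; apply Hn; exists r; auto. }
  exists (Rabs a0 + Rabs b0). intros a b Ha Hb.
  pose proof (Rle_abs a0). pose proof (Rle_abs (-a0)). pose proof (Rle_abs b0). pose proof (Rle_abs (-b0)).
  rewrite Rabs_Ropp in *.
  exists (RInt f a b). split. exact (RInt_correct f a b (Hex a b)).
  assert (RInt f a b <= v) by (apply Hub; exists a, b; split; auto; pose proof (Rabs_pos a0); pose proof (Rabs_pos b0); lra).
  assert (RInt f a0 b0 <= RInt f a b).
  { rewrite <- (RInt_Chasles f a a0 b); auto. rewrite <- (RInt_Chasles f a0 b0 b); auto.
    assert (0 <= RInt f a a0) by (apply RInt_ge_0; auto; lra).
    assert (0 <= RInt f b0 b) by (apply RInt_ge_0; auto; lra).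
    unfold plus; simpl. lra. }
  rewrite Rabs_left1; lra.
Qed.

Definition Qr (r x1 x2 : R) := x1 * x1 + 2 * r * x1 * x2 + x2 * x2.

Lemma inv2_Mrho r : -1 < r < 1 -> inv2 (inv2 (Mrho r)) = Mrho r.
Proof.
  intros Hr. unfold inv2, det2, Mrho; simpl.
  assert (1 * 1 - r * r <> 0) by nra.
  f_equal; field; repeat split; auto; try nra.
Qed.

Lemma det2_inv r : -1 < r < 1 -> det2 (inv2 (Mrho r)) = / (1 - r * r).
Proof.
  intros Hr. unfold inv2, det2, Mrho; simpl. field. nra.
Qed.

Lemma qform_M r x1 x2 : qform (Mrho r) x1 x2 = Qr r x1 x2.
Proof. unfold qform, Mrho, Qr; simpl; ring. Qed.

Lemma Qr_nonneg r x1 x2 : -1 < r < 1 -> 0 <= Qr r x1 x2.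
Proof. intros. unfold Qr.
  assert (0 <= (1 - r * r) * (x2 * x2)) by (apply Rmult_le_pos; nra).
  assert (0 <= (x1 + r * x2) * (x1 + r * x2)) by (apply Rle_0_sqr).
  assert (E: x1*x1 + 2*r*x1*x2 + x2*x2 = (x1+r*x2)*(x1+r*x2) + (1-r*r)*(x2*x2)) by ring. lra. Qed.

Lemma gauss_M r x1 x2 : -1 < r < 1 ->
  gauss_dens (inv2 (Mrho r)) x1 x2 = sqrt (1 - r * r) / (2 * PI) * exp (- Qr r x1 x2 / 2).
Proof.
  intros Hr. unfold gauss_dens. rewrite inv2_Mrho, qform_M, det2_inv; auto.
  assert (0 < 1 - r * r) by nra.
  rewrite sqrt_inv. pose proof (sqrt_lt_R0 _ H). pose proof PI_RGT_0.
  field. split; lra.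
Qed.

Lemma glb_exists (S : R -> Prop) : (exists x, S x) -> (forall x, S x -> 0 <= x) ->
  exists m, is_glb S m.
Proof.
  intros [x0 Hx0] Hlb.
  set (E := fun y => S (- y)).
  assert (HbE : bound E) by (exists 0; intros y Hy; apply Hlb in Hy; lra).
  assert (HnE : exists y, E y) by (exists (- x0); unfold E; rewrite Ropp_involutive; auto).
  destruct (completeness E HbE HnE) as [m [Hub Hlub]].
  exists (- m). split.
  - intros x Sx. assert (E (- x)) by (unfold E; rewrite Ropp_involutive; auto).
    apply Hub in H. lra.
  - intros b Hb. assert (m <= - b); [|lra]. apply Hlub. intros y Ey. apply Hb in Ey. lra.
Qed.

Lemma Rinf_spec (S : R -> Prop) : (exists m, is_glb S m) -> is_glb S (Rinf S).
Proof.
  intros H. unfold Rinf. apply epsilon_spec. exact H.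
Qed.

Lemma stat_le_iff r x1 x2 c : -1 < r < 1 ->
  (chibar_stat (inv2 (Mrho r)) x1 x2 <= c <->
   forall t1 t2, LambdaPlus t1 t2 -> Qr r x1 x2 - Qr r (x1 - t1) (x2 - t2) <= c).
Proof.
  intros Hr. unfold chibar_stat. rewrite inv2_Mrho by auto. rewrite qform_M.
  set (S := fun s => exists t1 t2, LambdaPlus t1 t2 /\ s = qform (Mrho r) (x1 - t1) (x2 - t2)).
  assert (HS : is_glb S (Rinf S)).
  { apply Rinf_spec, glb_exists.
    - exists (qform (Mrho r) (x1 - 1) (x2 - 0)). exists 1, 0. unfold LambdaPlus; split; [lra|auto].
    - intros s [t1 [t2 [_ ->]]]. rewrite qform_M. apply Qr_nonneg; auto. }
  destruct HS as [Hlb Hgl]. split.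
  - intros H t1 t2 Ht. assert (Rinf S <= Qr r (x1 - t1) (x2 - t2)); [|lra].
    apply Hlb. exists t1, t2. split; auto. now rewrite qform_M.
  - intros H. assert (Qr r x1 x2 - c <= Rinf S); [|lra].
    apply Hgl. intros s [t1 [t2 [Ht ->]]]. rewrite qform_M. specialize (H t1 t2 Ht). lra.
Qed.

Definition Rg (r c x1 y : R) : Prop :=
  y <= sqrt c /\ (1 - r * r) * x1 + r * y <= sqrt c /\
  (0 <= x1 -> r * x1 <= y -> y * y + (1 - r * r) * x1 * x1 <= c).

Lemma sup_iff_Rg r c x1 x2 : -1 < r < 1 -> 0 <= c ->
  ((forall t1 t2, LambdaPlus t1 t2 -> Qr r x1 x2 - Qr r (x1 - t1) (x2 - t2) <= c) <->
   Rg r c x1 (x2 + r * x1)).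
Proof.
  intros Hr Hc. pose proof (sqrt_pos c) as Hs0. pose proof (sqrt_sqrt c Hc) as Hss.
  set (s := sqrt c) in *.
  unfold Rg, Qr, LambdaPlus. split.
  - intros H. split; [|split].
    + destruct (Rle_or_lt (x2 + r * x1) s) as [|Hlt]; auto. exfalso.
      specialize (H 0 (x2 + r * x1)). assert (c < (x2 + r*x1) * (x2 + r*x1)) by nra.
      assert (0 <= 0 /\ 0 <= x2 + r * x1 /\ 0 < 0 + (x2 + r * x1)) by lra.
      specialize (H H1). nra.
    + destruct (Rle_or_lt ((1 - r * r) * x1 + r * (x2 + r * x1)) s) as [|Hlt]; auto. exfalso.
      set (A := x1 + r * x2).
      assert (HA : (1 - r * r) * x1 + r * (x2 + r * x1) = A) by (unfold A; ring).
      rewrite HA in Hlt.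
      specialize (H A 0). assert (c < A * A) by nra.
      assert (0 <= A /\ 0 <= 0 /\ 0 < A + 0) by lra.
      specialize (H H1). unfold A in *. nra.
    + intros Hx1 Hy. destruct (Rle_or_lt ((x2 + r * x1) * (x2 + r * x1) + (1 - r * r) * x1 * x1) c) as [|Hlt]; auto.
      exfalso. assert (Hx2 : 0 <= x2) by nra.
      assert (Hsum : 0 < x1 + x2).
      { destruct (Rle_or_lt (x1 + x2) 0); auto. assert (E1: x1 = 0) by lra. assert (E2: x2 = 0) by lra. rewrite E1, E2 in Hlt. nra. }
      specialize (H x1 x2 (conj Hx1 (conj Hx2 Hsum))). nra.
  - intros [HB [HA Hcap]] t1 t2 [Ht1 [Ht2 _]].
    set (A := x1 + r * x2). set (B := r * x1 + x2).
    assert (EA : (1 - r * r) * x1 + r * (x2 + r * x1) = A) by (unfold A; ring).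
    assert (HA' : A <= s) by (rewrite <- EA; exact HA).
    assert (HB' : B <= s) by (unfold B; rewrite Rplus_comm; exact HB).
    assert (Hphi : x1 * x1 + 2 * r * x1 * x2 + x2 * x2 -
       ((x1 - t1) * (x1 - t1) + 2 * r * (x1 - t1) * (x2 - t2) + (x2 - t2) * (x2 - t2))
       = 2 * t1 * A + 2 * t2 * B - (t1 * t1 + 2 * r * t1 * t2 + t2 * t2)) by (unfold A, B; ring).
    rewrite Hphi.
    assert (DA : A = x1 + r * x2) by reflexivity. assert (DB : B = r * x1 + x2) by reflexivity.
    clearbody A B s.
    assert (Hq : 0 <= t1 * t1 + 2 * r * t1 * t2 + t2 * t2) by (apply (Qr_nonneg r t1 t2 Hr)).
    assert (Cases : (0 <= x1 /\ 0 <= x2) \/ (x2 <= 0 /\ 0 <= A) \/ (x1 <= 0 /\ 0 <= B) \/ (A <= 0 /\ B <= 0)).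
    { destruct (Rle_or_lt 0 x1); destruct (Rle_or_lt 0 x2).
      - left; auto.
      - destruct (Rle_or_lt 0 A). right; left; lra.
        right; right; right. split; [lra|]. subst A B.
        assert (0 < r) by nra. nra.
      - destruct (Rle_or_lt 0 B). right; right; left; lra.
        right; right; right. split; [|lra]. subst A B.
        assert (0 < r) by nra. nra.
      - destruct (Rle_or_lt 0 A). right; left; lra.
        destruct (Rle_or_lt 0 B). right; right; left; lra.
        right; right; right; lra. }
    destruct Cases as [[H1 H2]|[[H1 H2]|[[H1 H2]|[H1 H2]]]].
    + assert (Hc' : (x2 + r * x1) * (x2 + r * x1) + (1 - r * r) * x1 * x1 <= c) by (apply Hcap; nra).
      assert (E1 : 2 * t1 * A + 2 * t2 * B - (t1 * t1 + 2 * r * t1 * t2 + t2 * t2) =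
        ((x2 + r * x1) * (x2 + r * x1) + (1 - r * r) * x1 * x1) - Qr r (x1 - t1) (x2 - t2))
        by (unfold Qr; subst A B; ring).
      rewrite E1. pose proof (Qr_nonneg r (x1 - t1) (x2 - t2) Hr). lra.
    + assert (A * A <= c) by (rewrite <- Hss; apply Rmult_le_compat; lra).
      assert (E1 : 2 * t1 * A + 2 * t2 * B - (t1 * t1 + 2 * r * t1 * t2 + t2 * t2) =
        A * A - (A - (t1 + r * t2)) * (A - (t1 + r * t2)) + (1 - r * r) * t2 * (2 * x2 - t2)) by (subst A B; ring).
      rewrite E1.
      assert (0 <= (1 - r * r) * t2 * (t2 - 2 * x2)) by (apply Rmult_le_pos; [apply Rmult_le_pos|]; nra).
      pose proof (Rle_0_sqr (A - (t1 + r * t2))). unfold Rsqr in *. lra.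
    + assert (B * B <= c) by (rewrite <- Hss; apply Rmult_le_compat; lra).
      assert (E1 : 2 * t1 * A + 2 * t2 * B - (t1 * t1 + 2 * r * t1 * t2 + t2 * t2) =
        B * B - (B - (r * t1 + t2)) * (B - (r * t1 + t2)) + (1 - r * r) * t1 * (2 * x1 - t1)) by (subst A B; ring).
      rewrite E1.
      assert (0 <= (1 - r * r) * t1 * (t1 - 2 * x1)) by (apply Rmult_le_pos; [apply Rmult_le_pos|]; nra).
      pose proof (Rle_0_sqr (B - (r * t1 + t2))). unfold Rsqr in *. lra.
    + assert (0 <= t1 * (- A)) by (apply Rmult_le_pos; lra).
      assert (0 <= t2 * (- B)) by (apply Rmult_le_pos; lra). lra.
Qed.

Lemma indic_T (P : Prop) : P -> indic P = 1.
Proof. intros H. unfold indic. destruct (excluded_middle_informative P); tauto. Qed.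
Lemma indic_F (P : Prop) : ~ P -> indic P = 0.
Proof. intros H. unfold indic. destruct (excluded_middle_informative P); tauto. Qed.
Lemma indic_01 (P : Prop) : 0 <= indic P <= 1.
Proof. unfold indic. destruct (excluded_middle_informative P); lra. Qed.

Lemma cont_R (f : R -> R) x : continuity_pt f x -> continuous f x.
Proof. intros H. apply continuity_pt_filterlim. exact H. Qed.

Definition gk (k y : R) := exp (- (k * (y * y))).

Lemma gk_cont k y : continuous (gk k) y.
Proof. apply cont_R. unfold gk. reg. Qed.

Lemma gk_ex k a b : ex_RInt (gk k) a b.
Proof. apply (ex_RInt_continuous (V:=R_CompleteNormedModule)). intros; apply gk_cont. Qed.

Lemma gk_pos k y : 0 < gk k y.
Proof. apply exp_pos. Qed.

Lemma gk_bound k a b : 0 < k -> a <= b -> RInt (gk k) a b <= PI / sqrt k.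
Proof.
  intros Hk Hab. pose proof (sqrt_lt_R0 k Hk) as Hs.
  pose proof (sqrt_sqrt k (Rlt_le _ _ Hk)) as Hss.
  set (F := fun y => atan (sqrt k * y) / sqrt k).
  assert (HI : is_RInt (fun y => / (1 + k * (y * y))) a b (minus (F b) (F a))).
  { apply (is_RInt_derive (V:=R_CompleteNormedModule)).
    - intros x _. unfold F. auto_derive; auto.
      match goal with |- ?a = ?b => change (@eq R a b) end.
      replace (sqrt k * x * (sqrt k * x * 1)) with (k * (x * x)) by (symmetry; transitivity (sqrt k * sqrt k * (x*x)); [ring | now rewrite Hss]).
      assert (0 <= k * (x * x)) by (apply Rmult_le_pos; [lra| apply Rle_0_sqr]).
      field. split; [lra|]. lra.
    - intros x _. apply cont_R. reg. assert (0 <= k * (x * x)) by nra. lra. }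
  assert (RInt (gk k) a b <= minus (F b) (F a)).
  { rewrite <- (is_RInt_unique _ _ _ _ HI). apply RInt_le; auto. apply gk_ex.
    eexists; exact HI.
    intros x _. unfold gk. assert (0 <= k * (x * x)) by nra.
    pose proof (exp_ineq1_le (k * (x * x))).
    rewrite exp_Ropp. apply Rinv_le_contravar; lra. }
  unfold minus, plus, opp in H; simpl in H. unfold F in H.
  pose proof (atan_bound (sqrt k * b)). pose proof (atan_bound (sqrt k * a)).
  assert (Eq3 : atan (sqrt k * b) / sqrt k + - (atan (sqrt k * a) / sqrt k) =
          (atan (sqrt k * b) - atan (sqrt k * a)) / sqrt k) by (field; lra).
  rewrite Eq3 in H. apply Rle_trans with (1 := H).
  unfold Rdiv. apply Rmult_le_compat_r. left; apply Rinv_0_lt_compat; auto. lra.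
Qed.

Lemma gk_ge0_int k a b : a <= b -> 0 <= RInt (gk k) a b.
Proof. intros. apply RInt_ge_0; auto. apply gk_ex. intros; left; apply gk_pos. Qed.

Definition hg := gk (/2).
Definition Gb := PI / sqrt (/2).

Lemma hg_bound a b : a <= b -> RInt hg a b <= Gb.
Proof. apply gk_bound. lra. Qed.

Definition PhiE := fun r => exists a, a <= 0 /\ r = RInt hg a 0.
Lemma PhiE_bound : bound PhiE.
Proof. exists Gb. intros r [a [Ha ->]]. apply hg_bound; auto. Qed.
Lemma PhiE_ne : exists r, PhiE r.
Proof. exists (RInt hg 0 0). exists 0. split; auto; lra. Qed.

Definition Phi0 := proj1_sig (completeness PhiE PhiE_bound PhiE_ne).
Lemma Phi0_lub : is_lub PhiE Phi0.
Proof. unfold Phi0. destruct (completeness PhiE PhiE_bound PhiE_ne); auto. Qed.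

Definition Phi t := Phi0 + RInt hg 0 t.

Lemma Phi0_tail : forall eps, 0 < eps -> exists N, forall a, a <= - N -> Rabs (RInt hg a 0 - Phi0) < eps.
Proof.
  intros eps Heps. destruct Phi0_lub as [Hub Hlub].
  assert (exists r, PhiE r /\ Phi0 - eps < r) as [r [[a0 [Ha0 ->]] Hr]].
  { apply NNPP. intros Hn. assert (Phi0 <= Phi0 - eps); [|lra].
    apply Hlub. intros r Er. destruct (Rle_or_lt r (Phi0 - eps)); auto.
    exfalso; apply Hn; exists r; auto. }
  exists (- a0). intros a Ha.
  assert (RInt hg a 0 <= Phi0) by (apply Hub; exists a; split; auto; lra).
  assert (RInt hg a0 0 <= RInt hg a 0).
  { rewrite <- (RInt_Chasles hg a a0 0) by apply gk_ex.
    pose proof (gk_ge0_int (/2) a a0 ltac:(lra)). unfold plus; simpl. unfold hg. lra. }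
  rewrite Rabs_left1; lra.
Qed.

Lemma Phi_tail t : forall eps, 0 < eps -> exists N, forall a, a <= - N -> Rabs (RInt hg a t - Phi t) < eps.
Proof.
  intros eps Heps. destruct (Phi0_tail eps Heps) as [N HN]. exists N. intros a Ha.
  rewrite <- (RInt_Chasles hg a 0 t) by apply gk_ex. unfold Phi, plus; simpl.
  specialize (HN a Ha). replace (RInt hg a 0 + RInt hg 0 t - (Phi0 + RInt hg 0 t)) with (RInt hg a 0 - Phi0) by ring.
  auto.
Qed.

Lemma Phi_diff l h : Phi h - Phi l = RInt hg l h.
Proof.
  unfold Phi. rewrite <- (RInt_Chasles hg l 0 h) by apply gk_ex.
  rewrite <- (opp_RInt_swap hg 0 l) by apply gk_ex.
  unfold plus, opp; simpl. ring.
Qed.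

Lemma Phi_cont t : continuous Phi t.
Proof.
  unfold Phi. apply (continuous_plus (fun _ => Phi0) (fun t => RInt hg 0 t)).
  apply continuous_const.
  apply ex_derive_continuous. exists (hg t). apply is_derive_RInt with (a := 0).
  - apply filter_forall. intros b. exact (RInt_correct hg 0 b (gk_ex _ 0 b)).
  - apply gk_cont.
Qed.

Lemma Phi_range t : 0 <= Phi t <= Gb.
Proof.
  split.
  - destruct (Rle_or_lt 0 (Phi t)) as [|Hlt]; auto. exfalso.
    destruct (Phi_tail t (- Phi t) ltac:(lra)) as [N HN].
    set (a := Rmin (- N) t). specialize (HN a (Rmin_l _ _)).
    pose proof (gk_ge0_int (/2) a t (Rmin_r _ _)). unfold hg in HN.
    apply Rabs_def2 in HN. lra.
  - destruct (Rle_or_lt (Phi t) Gb) as [|Hlt]; auto. exfalso.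
    destruct (Phi_tail t (Phi t - Gb) ltac:(lra)) as [N HN].
    set (a := Rmin (- N) t). specialize (HN a (Rmin_l _ _)).
    pose proof (hg_bound a t (Rmin_r _ _)).
    apply Rabs_def2 in HN. lra.
Qed.

Lemma Phi_mono l h : l <= h -> Phi l <= Phi h.
Proof. intros. pose proof (Phi_diff l h). pose proof (gk_ge0_int (/2) l h H). unfold hg in *. lra. Qed.

Lemma is_RInt_zero a b : is_RInt (fun _ => 0) a b 0.
Proof. pose proof (is_RInt_const (V:=R_NormedModule) a b 0) as H.
  replace (scal (b - a) (0:R_NormedModule)) with 0 in H; auto.
  unfold scal; simpl; unfold mult; simpl. ring. Qed.

Lemma is_RInt_seg a l h b : a <= l -> l <= h -> h <= b ->
  is_RInt (fun y => indic (l <= y <= h) * hg y) a b (RInt hg l h).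
Proof.
  intros H1 H2 H3.
  replace (RInt hg l h) with (plus (plus 0 (RInt hg l h)) 0) by (unfold plus; simpl; ring).
  apply (is_RInt_Chasles (V:=R_NormedModule)) with h; [apply (is_RInt_Chasles (V:=R_NormedModule)) with l|].
  - apply (is_RInt_ext (V:=R_NormedModule)) with (fun _ => 0).
    + intros x Hx. cbv beta. rewrite Rmin_left in Hx by lra. rewrite Rmax_right in Hx by lra.
      destruct (Req_dec x l).
      * lra.
      * rewrite indic_F by lra. now rewrite Rmult_0_l.
    + apply is_RInt_zero.
  - apply (is_RInt_ext (V:=R_NormedModule)) with hg.
    + intros x Hx. cbv beta. rewrite Rmin_left in Hx by lra. rewrite Rmax_right in Hx by lra.
      rewrite indic_T by lra. now rewrite Rmult_1_l.
    + exact (RInt_correct hg l h (gk_ex _ l h)).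
  - apply (is_RInt_ext (V:=R_NormedModule)) with (fun _ => 0).
    + intros x Hx. cbv beta. rewrite Rmin_left in Hx by lra. rewrite Rmax_right in Hx by lra.
      rewrite indic_F by lra. now rewrite Rmult_0_l.
    + apply is_RInt_zero.
Qed.

Lemma indic_ext (P Q : Prop) : (P <-> Q) -> indic P = indic Q.
Proof.
  intros H. unfold indic. destruct (excluded_middle_informative P), (excluded_middle_informative Q); tauto.
Qed.

Lemma imp_seg l h : l <= h -> imp (fun y => indic (l <= y <= h) * hg y) (Phi h - Phi l).
Proof.
  intros Hlh eps Heps. exists (Rabs l + Rabs h). intros a b Ha Hb.
  pose proof (Rle_abs l). pose proof (Rle_abs (-l)). pose proof (Rle_abs h). pose proof (Rle_abs (-h)).
  rewrite Rabs_Ropp in *.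
  exists (RInt hg l h). split.
  - apply is_RInt_seg; lra.
  - rewrite Phi_diff. replace (RInt hg l h - RInt hg l h) with 0 by ring. rewrite Rabs_R0. auto.
Qed.

Lemma imp_half h : imp (fun y => indic (y <= h) * hg y) (Phi h).
Proof.
  intros eps Heps. destruct (Phi_tail h eps Heps) as [N0 HN0].
  exists (Rabs N0 + Rabs h). intros a b Ha Hb.
  pose proof (Rle_abs N0). pose proof (Rle_abs (-N0)). pose proof (Rle_abs h). pose proof (Rle_abs (-h)).
  rewrite Rabs_Ropp in *.
  exists (RInt hg a h). split.
  - apply (is_RInt_ext (V:=R_NormedModule)) with (fun y => indic (a <= y <= h) * hg y).
    + intros x Hx. cbv beta. rewrite Rmin_left in Hx by lra.
      f_equal. apply indic_ext. lra.
    + apply is_RInt_seg; pose proof (Rabs_pos N0); lra.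
  - apply HN0. pose proof (Rabs_pos h). lra.
Qed.

Lemma imp_zero : imp (fun _ => 0) 0.
Proof.
  intros eps Heps. exists 0. intros a b _ _. exists 0. split.
  - apply is_RInt_zero.
  - rewrite Rminus_0_r, Rabs_R0. auto.
Qed.

Section Pieces.
Variables r c : R.
Hypothesis Hr : -1 < r < 1.
Hypothesis Hc : 0 <= c.

Let s := sqrt c.
Let k2 := 1 - r * r.
Lemma s_pos : 0 <= s. Proof. apply sqrt_pos. Qed.
Lemma s_sq : s * s = c. Proof. apply sqrt_sqrt; auto. Qed.
Lemma k2_pos : 0 < k2. Proof. unfold k2; nra. Qed.
Lemma k2_le1 : k2 <= 1. Proof. unfold k2; nra. Qed.

Definition Ef x1 := sqrt (c - (1 - r * r) * x1 * x1).
Definition Lf x1 := (sqrt c - (1 - r * r) * x1) / r.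

Lemma sq_le a b : 0 <= b -> a * a <= b * b -> a <= b.
Proof. intros. destruct (Rle_or_lt a b); auto. nra. Qed.

Lemma E_facts x1 : (1 - r * r) * x1 * x1 <= c -> 0 <= Ef x1 /\ Ef x1 * Ef x1 = c - (1 - r * r) * x1 * x1.
Proof. intros H. unfold Ef. split. apply sqrt_pos. apply sqrt_sqrt. lra. Qed.

Lemma Rg_unfold x1 y : Rg r c x1 y <->
  (y <= s /\ k2 * x1 + r * y <= s /\ (0 <= x1 -> r * x1 <= y -> y * y + k2 * x1 * x1 <= c)).
Proof. unfold Rg, s, k2. tauto. Qed.

Lemma piece_pa x1 y : 0 <= r -> x1 <= 0 -> (Rg r c x1 y <-> y <= s).
Proof.
  intros Hr0 Hx. rewrite Rg_unfold. pose proof s_pos. pose proof s_sq. pose proof k2_pos.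
  split; [tauto|]. intros Hy. split; [auto|split].
  - assert (r * y <= r * s) by (apply Rmult_le_compat_l; auto).
    assert (k2 * x1 <= 0) by (apply Rmult_le_0_l; lra). nra.
  - intros Hx0 Hy0. assert (x1 = 0) by lra. subst x1.
    assert (0 <= y) by lra. assert (y * y <= s * s) by (apply Rmult_le_compat; lra). lra.
Qed.

Lemma piece_pb x1 y : 0 <= r -> 0 <= x1 <= s -> (Rg r c x1 y <-> y <= Ef x1).
Proof.
  intros Hr0 Hx. rewrite Rg_unfold. pose proof s_pos. pose proof s_sq. pose proof k2_pos.
  assert (Hxx : x1 * x1 <= c) by (rewrite <- H0; apply Rmult_le_compat; lra).
  assert (Hk : (1 - r * r) * x1 * x1 <= c) by (unfold k2 in *; nra).
  destruct (E_facts x1 Hk) as [HE0 HE2]. set (E := Ef x1) in *. fold k2 in HE2.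
  assert (HErx : r * x1 <= E).
  { apply sq_le; auto. assert (0 <= r * r * (x1 * x1)) by nra. unfold k2 in HE2. nra. }
  assert (HEs : E <= s) by (apply sq_le; auto; nra).
  split.
  - intros [H2 [H3 H4]]. destruct (Rle_or_lt y E) as [|Hlt]; auto. exfalso.
    assert (y * y + k2 * x1 * x1 <= c) by (apply H4; lra). nra.
  - intros Hy. split; [lra|split].
    + assert (r * y <= r * E) by (apply Rmult_le_compat_l; auto).
      assert (Hid : c - (k2 * x1 + r * E) * (k2 * x1 + r * E) = k2 * ((E - r * x1) * (E - r * x1))).
      { rewrite <- (Rplus_0_r c). replace (c + 0) with (E * E + k2 * x1 * x1) by lra.
        unfold k2. ring. }
      assert (0 <= k2 * ((E - r * x1) * (E - r * x1))) by (apply Rmult_le_pos; [lra| apply Rle_0_sqr]).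
      assert (k2 * x1 + r * E <= s) by (apply sq_le; auto; lra). lra.
    + intros Hx0 Hry. assert (0 <= y) by nra.
      assert (y * y <= E * E) by (apply Rmult_le_compat; lra). lra.
Qed.

Lemma piece_pc x1 y : 0 < r -> s <= x1 -> (Rg r c x1 y <-> y <= Lf x1).
Proof.
  intros Hr0 Hx. rewrite Rg_unfold. pose proof s_pos. pose proof s_sq. pose proof k2_pos.
  unfold Lf. fold s. fold k2.
  assert (Hiff : y <= (s - k2 * x1) / r <-> k2 * x1 + r * y <= s).
  { split; intros H2.
    - apply Rmult_le_compat_l with (r := r) in H2; [|lra].
      replace (r * ((s - k2 * x1) / r)) with (s - k2 * x1) in H2 by (field; lra). lra.
    - apply Rmult_le_reg_l with r; auto.
      replace (r * ((s - k2 * x1) / r)) with (s - k2 * x1) by (field; lra). lra. }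
  rewrite Hiff. split; [tauto|]. intros H2. split; [|split; auto].
  - assert (s * (1 - r) <= k2 * x1).
    { unfold k2. replace ((1 - r * r) * x1) with ((1 - r) * ((1 + r) * x1)) by ring.
      rewrite Rmult_comm. apply Rmult_le_compat_l; nra. }
    assert (r * y <= r * s) by lra. apply Rmult_le_reg_l with r; auto.
  - intros Hx0 Hy. assert (r * (r * x1) <= r * y) by (apply Rmult_le_compat_l; lra).
    assert (x1 <= s) by (unfold k2 in *; nra).
    assert (x1 = s) by lra. subst x1.
    assert (y = r * s).
    { assert (r * y <= r * (r * s)) by (unfold k2 in *; nra).
      assert (y <= r * s) by (apply Rmult_le_reg_l with r; auto). lra. }
    subst y. unfold k2. nra.
Qed.

Lemma piece_pc0 x1 y : r = 0 -> s < x1 -> ~ Rg r c x1 y.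
Proof.
  intros Hr0 Hx. rewrite Rg_unfold. subst r. unfold k2. intros [_ [H _]]. lra.
Qed.

Lemma Lf_iff_neg x1 y : r < 0 -> (Lf x1 <= y <-> k2 * x1 + r * y <= s).
Proof.
  intros Hr0. unfold Lf. fold s. fold k2. split; intros H2.
  - apply Rmult_le_compat_neg_l with (r := r) in H2; [|lra].
    replace (r * ((s - k2 * x1) / r)) with (s - k2 * x1) in H2 by (field; lra). lra.
  - apply Rmult_le_reg_l with (- r); [lra|].
    replace (- r * ((s - k2 * x1) / r)) with (- (s - k2 * x1)) by (field; lra). lra.
Qed.

Lemma piece_na x1 y : r < 0 -> x1 <= 0 -> (Rg r c x1 y <-> Lf x1 <= y <= s).
Proof.
  intros Hr0 Hx. rewrite Rg_unfold, Lf_iff_neg by auto. pose proof s_pos. pose proof s_sq.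
  split; [tauto|]. intros [H1 H2]. split; auto. split; auto.
  intros Hx0 Hy0. assert (x1 = 0) by lra. subst x1.
  assert (0 <= y) by lra. assert (y * y <= s * s) by (apply Rmult_le_compat; lra). lra.
Qed.

Lemma Lf_le_s x1 : r < 0 -> x1 <= 0 -> Lf x1 <= s.
Proof.
  intros Hr0 Hx. pose proof s_pos. pose proof k2_pos.
  apply Lf_iff_neg; auto. assert (k2 * x1 <= 0) by (apply Rmult_le_0_l; lra). nra.
Qed.

Lemma piece_nb x1 y : r < 0 -> 0 <= x1 <= s -> (Rg r c x1 y <-> Lf x1 <= y <= Ef x1).
Proof.
  intros Hr0 Hx. rewrite Rg_unfold, Lf_iff_neg by auto. pose proof s_pos. pose proof s_sq. pose proof k2_pos.
  assert (Hxx : x1 * x1 <= c) by (rewrite <- H0; apply Rmult_le_compat; lra).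
  assert (Hk : (1 - r * r) * x1 * x1 <= c) by (unfold k2 in *; nra).
  destruct (E_facts x1 Hk) as [HE0 HE2]. set (E := Ef x1) in *. fold k2 in HE2.
  assert (HErx : - (r * x1) <= E).
  { apply sq_le; auto. assert (0 <= r * r * (x1 * x1)) by nra. unfold k2 in HE2. nra. }
  assert (HEs : E <= s) by (apply sq_le; auto; nra).
  split.
  - intros [H2 [H3 H4]]. split; auto. destruct (Rle_or_lt y E) as [|Hlt]; auto. exfalso.
    assert (y * y + k2 * x1 * x1 <= c) by (apply H4; nra). nra.
  - intros [Hy1 Hy2]. split; [lra|split; auto].
    intros Hx0 Hry. assert (y * y <= E * E) by nra. lra.
Qed.

Lemma Lf_le_E x1 : r < 0 -> 0 <= x1 <= s -> Lf x1 <= Ef x1.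
Proof.
  intros Hr0 Hx. pose proof s_pos. pose proof s_sq. pose proof k2_pos.
  assert (Hxx : x1 * x1 <= c) by (rewrite <- H0; apply Rmult_le_compat; lra).
  assert (Hk : (1 - r * r) * x1 * x1 <= c) by (unfold k2 in *; nra).
  destruct (E_facts x1 Hk) as [HE0 HE2].
  apply Rle_trans with 0; auto.
  unfold Lf. fold s. apply Rmult_le_reg_l with (- r); [lra|].
  replace (- r * ((s - (1 - r * r) * x1) / r)) with (- (s - (1 - r * r) * x1)) by (field; lra).
  assert ((1 - r * r) * x1 <= s); [|lra].
  assert ((1 - r * r) * x1 <= x1) by nra. lra.
Qed.

Lemma piece_nc x1 y : r < 0 -> s <= x1 -> (1 - r * r) * x1 * x1 <= c ->
  (Rg r c x1 y <-> - Ef x1 <= y <= Ef x1).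
Proof.
  intros Hr0 Hx Hk. rewrite Rg_unfold. pose proof s_pos. pose proof s_sq. pose proof k2_pos.
  destruct (E_facts x1 Hk) as [HE0 HE2]. set (E := Ef x1) in *. fold k2 in HE2, Hk.
  assert (HEs : E <= s) by (apply sq_le; auto; nra).
  split.
  - intros [H2 [H3 H4]].
    assert (Hry : r * x1 <= y).
    { apply Rmult_le_reg_l with (- r); [lra|].
      assert (k2 * x1 + r * r * x1 = x1) by (unfold k2; ring). nra. }
    assert (y * y + k2 * x1 * x1 <= c) by (apply H4; lra).
    assert (y * y <= E * E) by lra.
    split; [| apply sq_le; auto; lra].
    destruct (Rle_or_lt (- E) y); auto. nra.
  - intros [Hy1 Hy2]. assert (y * y <= E * E) by nra.
    split; [lra|split].
    + assert (Hid : k2 * x1 * x1 + y * y - (k2 * x1 + r * y) * (k2 * x1 + r * y) =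
                    k2 * ((r * x1 - y) * (r * x1 - y))) by (unfold k2; ring).
      assert (0 <= k2 * ((r * x1 - y) * (r * x1 - y))) by (apply Rmult_le_pos; [lra| apply Rle_0_sqr]).
      apply sq_le; auto. lra.
    + intros; lra.
Qed.

Lemma piece_nd x1 y : r < 0 -> s <= x1 -> c < (1 - r * r) * x1 * x1 -> ~ Rg r c x1 y.
Proof.
  intros Hr0 Hx Hk. rewrite Rg_unfold. pose proof s_pos. pose proof k2_pos. fold k2 in Hk.
  intros [H2 [H3 H4]].
  assert (Hry : r * x1 <= y).
  { apply Rmult_le_reg_l with (- r); [lra|].
    assert (k2 * x1 + r * r * x1 = x1) by (unfold k2; ring). nra. }
  assert (y * y + k2 * x1 * x1 <= c) by (apply H4; lra).
  assert (0 <= y * y) by apply Rle_0_sqr. lra.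
Qed.

End Pieces.

Definition p2 r c := sqrt c / sqrt (1 - r * r).

Definition mfun r c x1 :=
  if Rle_dec 0 r then
    if Rle_dec x1 0 then Phi (sqrt c)
    else if Rle_dec x1 (sqrt c) then Phi (Ef r c x1)
    else if Rlt_dec 0 r then Phi (Lf r c x1) else 0
  else
    if Rle_dec x1 0 then Phi (sqrt c) - Phi (Lf r c x1)
    else if Rle_dec x1 (sqrt c) then Phi (Ef r c x1) - Phi (Lf r c x1)
    else if Rle_dec x1 (p2 r c) then Phi (Ef r c x1) - Phi (- Ef r c x1)
    else 0.

Lemma p2_iff r c x1 : -1 < r < 1 -> 0 <= c -> 0 <= x1 ->
  (x1 <= p2 r c <-> (1 - r * r) * x1 * x1 <= c).
Proof.
  intros Hr Hc Hx. unfold p2.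
  assert (Hk : 0 < 1 - r * r) by nra.
  pose proof (sqrt_lt_R0 _ Hk) as Hsk. pose proof (sqrt_sqrt _ (Rlt_le _ _ Hk)) as Hkk.
  pose proof (sqrt_pos c). pose proof (sqrt_sqrt c Hc).
  assert (E : (1 - r * r) * x1 * x1 = (sqrt (1 - r * r) * x1) * (sqrt (1 - r * r) * x1)).
  { transitivity (sqrt (1 - r * r) * sqrt (1 - r * r) * (x1 * x1)); [rewrite Hkk; ring| ring]. }
  rewrite E. split; intros H1.
  - apply Rmult_le_compat_l with (r := sqrt (1 - r * r)) in H1; [|lra].
    replace (sqrt (1 - r * r) * (sqrt c / sqrt (1 - r * r))) with (sqrt c) in H1 by (field; lra).
    rewrite <- H0. apply Rmult_le_compat; try lra; apply Rmult_le_pos; lra.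
  - apply Rmult_le_reg_l with (sqrt (1 - r * r)); auto.
    replace (sqrt (1 - r * r) * (sqrt c / sqrt (1 - r * r))) with (sqrt c) by (field; lra).
    apply sq_le; auto. lra.
Qed.

Lemma inner_m r c x1 : -1 < r < 1 -> 0 <= c ->
  imp (fun y => indic (Rg r c x1 y) * hg y) (mfun r c x1).
Proof.
  intros Hr Hc. unfold mfun. pose proof (sqrt_pos c).
  destruct (Rle_dec 0 r) as [Hr0|Hr0].
  - destruct (Rle_dec x1 0) as [Hx|Hx].
    + eapply imp_ext; [|apply (imp_half (sqrt c))]. intros y. cbv beta. f_equal.
      apply indic_ext. rewrite piece_pa; auto. tauto.
    + destruct (Rle_dec x1 (sqrt c)) as [Hx2|Hx2].
      * eapply imp_ext; [|apply (imp_half (Ef r c x1))]. intros y. cbv beta. f_equal.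
        apply indic_ext. rewrite piece_pb; auto. tauto. lra.
      * destruct (Rlt_dec 0 r) as [Hr1|Hr1].
        -- eapply imp_ext; [|apply (imp_half (Lf r c x1))]. intros y. cbv beta. f_equal.
           apply indic_ext. rewrite piece_pc; auto. tauto. lra.
        -- eapply imp_ext; [|apply imp_zero]. intros y. cbv beta.
           rewrite indic_F. ring. apply piece_pc0; auto; lra.
  - destruct (Rle_dec x1 0) as [Hx|Hx].
    + eapply imp_ext; [|apply (imp_seg (Lf r c x1) (sqrt c))]. intros y. cbv beta. f_equal.
      apply indic_ext. rewrite piece_na; auto. tauto. lra. apply Lf_le_s; auto; lra.
    + destruct (Rle_dec x1 (sqrt c)) as [Hx2|Hx2].
      * eapply imp_ext; [|apply (imp_seg (Lf r c x1) (Ef r c x1))]. intros y. cbv beta. f_equal.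
        apply indic_ext. rewrite piece_nb; auto. tauto. lra. lra. apply Lf_le_E; auto; lra.
      * destruct (Rle_dec x1 (p2 r c)) as [Hx3|Hx3].
        -- assert (Hk : (1 - r * r) * x1 * x1 <= c) by (apply p2_iff; auto; lra).
           pose proof (E_facts r c x1 Hk) as [HE _].
           eapply imp_ext; [|apply (imp_seg (- Ef r c x1) (Ef r c x1))]. intros y. cbv beta. f_equal.
           apply indic_ext. rewrite piece_nc; auto. tauto. lra. lra. lra.
        -- assert (Hk : c < (1 - r * r) * x1 * x1).
           { destruct (Rlt_or_le c ((1 - r * r) * x1 * x1)); auto. exfalso. apply Hx3. apply p2_iff; auto; lra. }
           eapply imp_ext; [|apply imp_zero]. intros y. cbv beta.
           rewrite indic_F. ring. apply piece_nd; auto; lra.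
Qed.

Lemma mfun_range r c x1 : -1 < r < 1 -> 0 <= c -> 0 <= mfun r c x1 <= Gb.
Proof.
  intros Hr Hc. unfold mfun. pose proof (sqrt_pos c).
  assert (D : forall l h, l <= h -> 0 <= Phi h - Phi l <= Gb).
  { intros l h Hlh. pose proof (Phi_mono l h Hlh). pose proof (Phi_range l). pose proof (Phi_range h). lra. }
  destruct (Rle_dec 0 r) as [Hr0|Hr0].
  - destruct (Rle_dec x1 0); [apply Phi_range|].
    destruct (Rle_dec x1 (sqrt c)); [apply Phi_range|].
    destruct (Rlt_dec 0 r); [apply Phi_range|]. pose proof PI_RGT_0. unfold Gb.
    split; [lra|]. left. apply Rdiv_lt_0_compat; auto. apply sqrt_lt_R0; lra.
  - destruct (Rle_dec x1 0). apply D, Lf_le_s; auto; lra.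
    destruct (Rle_dec x1 (sqrt c)). apply D, Lf_le_E; auto; lra.
    destruct (Rle_dec x1 (p2 r c)).
    + assert (Hk : (1 - r * r) * x1 * x1 <= c) by (apply p2_iff; auto; lra).
      pose proof (E_facts r c x1 Hk) as [HE _]. apply D. lra.
    + pose proof PI_RGT_0. unfold Gb.
      split; [lra|]. left. apply Rdiv_lt_0_compat; auto. apply sqrt_lt_R0; lra.
Qed.

Definition Cf r x1 := sqrt (1 - r * r) / (2 * PI) * exp (- ((1 - r * r) * x1 * x1) / 2).

Definition gfun r c x1 := if Rle_dec 0 c then Cf r x1 * mfun r c x1 else 0.

Lemma gauss_split r x1 x2 : -1 < r < 1 ->
  gauss_dens (inv2 (Mrho r)) x1 x2 = Cf r x1 * hg (x2 + r * x1).
Proof.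
  intros Hr. rewrite gauss_M by auto. unfold Cf, hg, gk. rewrite Rmult_assoc. f_equal.
  rewrite <- exp_plus. f_equal. unfold Qr. field.
Qed.

Lemma stat_neg r c x1 x2 : -1 < r < 1 -> c < 0 -> ~ chibar_stat (inv2 (Mrho r)) x1 x2 <= c.
Proof.
  intros Hr Hc H. rewrite stat_le_iff in H by auto.
  set (A := x1 + r * x2).
  set (d := Rmin 1 (- c / (2 * (2 * Rabs A + 1)))).
  pose proof (Rabs_pos A).
  assert (Hd0 : 0 < d).
  { unfold d. apply Rmin_pos; [lra|]. apply Rdiv_lt_0_compat; lra. }
  assert (Hd1 : d <= 1) by apply Rmin_l.
  assert (Hd2 : d * (2 * Rabs A + 1) <= - c / 2).
  { assert (d <= - c / (2 * (2 * Rabs A + 1))) by (unfold d; apply Rmin_r).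
    apply Rmult_le_compat_r with (r := 2 * Rabs A + 1) in H1; [|lra].
    replace (- c / (2 * (2 * Rabs A + 1)) * (2 * Rabs A + 1)) with (- c / 2) in H1 by (field; lra). lra. }
  specialize (H d 0). assert (LambdaPlus d 0) by (unfold LambdaPlus; lra).
  specialize (H H1).
  replace (Qr r x1 x2 - Qr r (x1 - d) (x2 - 0)) with (2 * d * A - d * d) in H by (unfold Qr, A; ring).
  assert (- (d * Rabs A) <= d * A).
  { pose proof (Rabs_pos A). destruct (Rle_or_lt 0 A).
    - rewrite Rabs_pos_eq by lra. nra.
    - rewrite Rabs_left by lra. nra. }
  assert (d * d <= d) by nra. nra.
Qed.

Lemma inner_full r c x1 : -1 < r < 1 ->
  imp (fun x2 => indic (chibar_stat (inv2 (Mrho r)) x1 x2 <= c) * gauss_dens (inv2 (Mrho r)) x1 x2)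
      (gfun r c x1).
Proof.
  intros Hr. unfold gfun. destruct (Rle_dec 0 c) as [Hc|Hc].
  - pose proof (imp_scal _ _ (Cf r x1) (imp_shift _ _ (r * x1) (inner_m r c x1 Hr Hc))) as H.
    eapply imp_ext; [|exact H]. intros x2. cbv beta. rewrite gauss_split by auto.
    assert (Ei : indic (chibar_stat (inv2 (Mrho r)) x1 x2 <= c) = indic (Rg r c x1 (x2 + r * x1))).
    { apply indic_ext. rewrite stat_le_iff by auto. apply sup_iff_Rg; auto. }
    rewrite Ei. ring.
  - eapply imp_ext; [|apply imp_zero]. intros x2. cbv beta. rewrite indic_F. ring.
    apply stat_neg; auto; lra.
Qed.

Definition IntEv (f : R -> R) := forall a b, ex_RInt f a b.

Lemma IntEv_cont f : (forall x, continuous f x) -> IntEv f.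
Proof. intros H a b. apply (ex_RInt_continuous (V:=R_CompleteNormedModule)). intros; apply H. Qed.

Lemma IntEv_glue g G1 G2 p : IntEv G1 -> IntEv G2 ->
  (forall x, x < p -> g x = G1 x) -> (forall x, p < x -> g x = G2 x) -> IntEv g.
Proof.
  intros H1 H2 E1 E2.
  assert (Hle : forall a b, a <= b -> ex_RInt g a b).
  { intros a b Hab. destruct (Rle_or_lt b p).
    - apply (ex_RInt_ext (V:=R_NormedModule)) with G1; [|apply H1].
      intros x Hx. rewrite Rmin_left in Hx by lra. rewrite Rmax_right in Hx by lra. symmetry; apply E1; lra.
    - destruct (Rle_or_lt p a).
      + apply (ex_RInt_ext (V:=R_NormedModule)) with G2; [|apply H2].
        intros x Hx. rewrite Rmin_left in Hx by lra. rewrite Rmax_right in Hx by lra. symmetry; apply E2; lra.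
      + apply (ex_RInt_Chasles (V:=R_NormedModule)) with p.
        * apply (ex_RInt_ext (V:=R_NormedModule)) with G1; [|apply H1].
          intros x Hx. rewrite Rmin_left in Hx by lra. rewrite Rmax_right in Hx by lra. symmetry; apply E1; lra.
        * apply (ex_RInt_ext (V:=R_NormedModule)) with G2; [|apply H2].
          intros x Hx. rewrite Rmin_left in Hx by lra. rewrite Rmax_right in Hx by lra. symmetry; apply E2; lra. }
  intros a b. destruct (Rle_or_lt a b); auto.
  apply (ex_RInt_swap (V:=R_NormedModule)). apply Hle; lra.
Qed.

Lemma cont_mul (f g : R -> R) x : continuous f x -> continuous g x -> continuous (fun y => f y * g y) x.
Proof. intros. exact (continuous_mult f g x H H0). Qed.
Lemma cont_sub (f g : R -> R) x : continuous f x -> continuous g x -> continuous (fun y => f y - g y) x.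
Proof. intros. exact (continuous_minus f g x H H0). Qed.

Lemma Cf_cont r x : continuous (Cf r) x.
Proof. apply cont_R. unfold Cf. reg. Qed.

Lemma Ef_cont r c x : continuous (Ef r c) x.
Proof. unfold Ef. apply continuous_sqrt_comp. apply cont_R. reg. Qed.

Lemma Lf_cont r c x : continuous (Lf r c) x.
Proof. unfold Lf. apply cont_R. unfold Rdiv. reg. Qed.

Lemma Phi_comp_cont (f : R -> R) (x : R) : continuous f x -> continuous (fun y => Phi (f y)) x.
Proof. intros H. apply continuous_comp; auto. apply Phi_cont. Qed.

Lemma gfun_IntEv r c : -1 < r < 1 -> IntEv (gfun r c).
Proof.
  intros Hr. unfold gfun. destruct (Rle_dec 0 c) as [Hc|Hc].
  2: { apply IntEv_cont. intros; apply continuous_const. }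
  unfold mfun. destruct (Rle_dec 0 r) as [Hr0|Hr0].
  - set (H2 := fun x => Cf r x * (if Rlt_dec 0 r then Phi (Lf r c x) else 0)).
    set (H1 := fun x => if Rle_dec x (sqrt c) then Cf r x * Phi (Ef r c x) else H2 x).
    apply IntEv_glue with (G1 := fun x => Cf r x * Phi (sqrt c)) (G2 := H1) (p := 0).
    + apply IntEv_cont. intros x. apply cont_mul. apply Cf_cont. apply continuous_const.
    + apply IntEv_glue with (G1 := fun x => Cf r x * Phi (Ef r c x)) (G2 := H2) (p := sqrt c).
      * apply IntEv_cont. intros x. apply cont_mul. apply Cf_cont. apply Phi_comp_cont, Ef_cont.
      * apply IntEv_cont. intros x. unfold H2. apply cont_mul. apply Cf_cont.
        destruct (Rlt_dec 0 r). apply Phi_comp_cont, Lf_cont. apply continuous_const.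
      * intros x Hx. unfold H1. destruct (Rle_dec x (sqrt c)); [auto|lra].
      * intros x Hx. unfold H1. destruct (Rle_dec x (sqrt c)); [lra|auto].
    + intros x Hx. destruct (Rle_dec x 0); [auto|lra].
    + intros x Hx. unfold H1, H2. destruct (Rle_dec x 0); [lra|].
      destruct (Rle_dec x (sqrt c)); reflexivity.
  - set (F2 := fun x => Cf r x * (Phi (Ef r c x) - Phi (- Ef r c x))).
    set (H3 := fun x => if Rle_dec x (p2 r c) then F2 x else 0).
    set (F1 := fun x => Cf r x * (Phi (Ef r c x) - Phi (Lf r c x))).
    set (H2 := fun x => if Rle_dec x (sqrt c) then F1 x else H3 x).
    apply IntEv_glue with (G1 := fun x => Cf r x * (Phi (sqrt c) - Phi (Lf r c x))) (G2 := H2) (p := 0).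
    + apply IntEv_cont. intros x. apply cont_mul. apply Cf_cont. apply cont_sub.
      apply continuous_const. apply Phi_comp_cont, Lf_cont.
    + apply IntEv_glue with (G1 := F1) (G2 := H3) (p := sqrt c).
      * apply IntEv_cont. intros x. unfold F1. apply cont_mul. apply Cf_cont. apply cont_sub.
        apply Phi_comp_cont, Ef_cont. apply Phi_comp_cont, Lf_cont.
      * apply IntEv_glue with (G1 := F2) (G2 := fun _ => 0) (p := p2 r c).
        -- apply IntEv_cont. intros x. unfold F2. apply cont_mul. apply Cf_cont. apply cont_sub.
           apply Phi_comp_cont, Ef_cont. apply Phi_comp_cont.
           apply (continuous_opp (V:=R_NormedModule)), Ef_cont.
        -- apply IntEv_cont. intros; apply continuous_const.
        -- intros x Hx. unfold H3. destruct (Rle_dec x (p2 r c)); [auto|lra].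
        -- intros x Hx. unfold H3. destruct (Rle_dec x (p2 r c)); [lra|auto].
      * intros x Hx. unfold H2. destruct (Rle_dec x (sqrt c)); [auto|lra].
      * intros x Hx. unfold H2. destruct (Rle_dec x (sqrt c)); [lra|auto].
    + intros x Hx. destruct (Rle_dec x 0); [auto|lra].
    + intros x Hx. unfold H2, H3, F1, F2. destruct (Rle_dec x 0); [lra|].
      destruct (Rle_dec x (sqrt c)); [reflexivity|]. destruct (Rle_dec x (p2 r c)); [reflexivity| ring].
Qed.

Lemma Cf_eq r x : Cf r x = sqrt (1 - r * r) / (2 * PI) * gk ((1 - r * r) / 2) x.
Proof. unfold Cf, gk. f_equal. f_equal. field. Qed.

Lemma Cf_nonneg r x : 0 <= Cf r x.
Proof.
  unfold Cf. apply Rmult_le_pos; [|left; apply exp_pos].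
  unfold Rdiv. apply Rmult_le_pos. apply sqrt_pos. left. apply Rinv_0_lt_compat. pose proof PI_RGT_0; lra.
Qed.

Lemma gfun_range r c x : -1 < r < 1 ->
  0 <= gfun r c x <= (sqrt (1 - r * r) / (2 * PI) * Gb) * gk ((1 - r * r) / 2) x.
Proof.
  intros Hr. unfold gfun. pose proof (Cf_nonneg r x) as HC. pose proof (Cf_eq r x) as HE.
  assert (0 <= sqrt (1 - r * r) / (2 * PI) * Gb * gk ((1 - r * r) / 2) x).
  { replace (sqrt (1 - r * r) / (2 * PI) * Gb * gk ((1 - r * r) / 2) x) with (Cf r x * Gb) by (rewrite HE; ring).
    apply Rmult_le_pos; auto. unfold Gb. left. apply Rdiv_lt_0_compat. apply PI_RGT_0. apply sqrt_lt_R0; lra. }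
  destruct (Rle_dec 0 c) as [Hc|Hc]; [|lra].
  pose proof (mfun_range r c x Hr Hc) as [H1 H2]. split.
  - apply Rmult_le_pos; auto.
  - replace (sqrt (1 - r * r) / (2 * PI) * Gb * gk ((1 - r * r) / 2) x) with (Cf r x * Gb) by (rewrite HE; ring).
    apply Rmult_le_compat_l; auto.
Qed.

Lemma gfun_bound r c : -1 < r < 1 -> exists B, forall a b, a <= b -> RInt (gfun r c) a b <= B.
Proof.
  intros Hr. set (K := sqrt (1 - r * r) / (2 * PI) * Gb).
  assert (HK : 0 <= K).
  { unfold K. apply Rmult_le_pos. unfold Rdiv. apply Rmult_le_pos. apply sqrt_pos. left. apply Rinv_0_lt_compat. pose proof PI_RGT_0; lra.
    unfold Gb. left. apply Rdiv_lt_0_compat. apply PI_RGT_0. apply sqrt_lt_R0; lra. }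
  assert (Hk : 0 < (1 - r * r) / 2) by nra.
  exists (K * (PI / sqrt ((1 - r * r) / 2))). intros a b Hab.
  apply Rle_trans with (RInt (fun x => K * gk ((1 - r * r) / 2) x) a b).
  - apply RInt_le; auto. apply gfun_IntEv; auto.
    apply (ex_RInt_continuous (V:=R_CompleteNormedModule)). intros. apply cont_mul. apply continuous_const. apply gk_cont.
    intros x _. apply gfun_range; auto.
  - assert (HI : is_RInt (fun x => K * gk ((1 - r * r) / 2) x) a b (K * RInt (gk ((1 - r * r) / 2)) a b)).
    { exact (is_RInt_scal (V:=R_NormedModule) (gk ((1 - r * r) / 2)) a b K _ (RInt_correct _ a b (gk_ex _ a b))). }
    rewrite (is_RInt_unique _ _ _ _ HI).
    apply Rmult_le_compat_l; auto. apply gk_bound; auto.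
Qed.

Lemma cdf_exists r c : -1 < r < 1 -> exists p, chibar_cdf (inv2 (Mrho r)) c p.
Proof.
  intros Hr. destruct (imp_exists (gfun r c)) as [p Hp].
  - intros x. apply gfun_range; auto.
  - apply gfun_IntEv; auto.
  - apply gfun_bound; auto.
  - exists p, (gfun r c). split.
    + intros x1. apply improper_iff. apply inner_full; auto.
    + apply improper_iff; auto.
Qed.

Section Compare.
Variables l r : R.
Hypothesis Hl : -1 < l < 1.
Hypothesis Hr : -1 < r < 1.
Hypothesis Hlr : l <= r.

Let a := sqrt (1 - r * r) / sqrt (1 - l * l).
Let b := r - l * a.

Lemma a_pos : 0 < a.
Proof. unfold a. apply Rdiv_lt_0_compat; apply sqrt_lt_R0; nra. Qed.

Lemma a_sq : a * a * (1 - l * l) = 1 - r * r.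
Proof.
  unfold a. assert (0 < 1 - l * l) by nra. assert (0 < 1 - r * r) by nra.
  pose proof (sqrt_lt_R0 _ H). pose proof (sqrt_sqrt _ (Rlt_le _ _ H)). pose proof (sqrt_sqrt _ (Rlt_le _ _ H0)).
  transitivity ((sqrt (1 - r * r) * sqrt (1 - r * r)) / (sqrt (1 - l * l) * sqrt (1 - l * l)) * (1 - l * l)).
  field. lra. rewrite H2, H3. field. lra.
Qed.

Lemma b_nonneg : 0 <= b.
Proof.
  unfold b. pose proof a_pos. pose proof a_sq.
  destruct (Rle_or_lt 0 l) as [Hl0|Hl0].
  - (* l >= 0, so r >= 0, and a <= 1 since 1 - r^2 <= 1 - l^2 *)
    assert (a <= 1).
    { apply sq_le; [lra|]. assert (a * a * (1 - l * l) <= 1 * 1 * (1 - l * l)) by nra.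
      apply Rmult_le_reg_r with (1 - l * l); nra. }
    nra.
  - destruct (Rle_or_lt 0 r) as [H1|H1].
    + nra.
    + (* l <= r < 0: r^2 <= l^2, so a >= 1 *)
      assert (1 <= a).
      { destruct (Rle_or_lt 1 a); auto. exfalso.
        assert (a * a < 1) by nra. assert (a * a * (1 - l * l) < 1 - l * l) by (apply Rmult_lt_compat_r with (r := 1 - l*l) in H2; nra).
        assert (r * r <= l * l) by (assert (0 <= (r - l) * (- r - l)) by (apply Rmult_le_pos; lra); nra). lra. }
      nra.
Qed.

Lemma Q_transf z1 z2 : Qr l (a * z1) (b * z1 + z2) = Qr r z1 z2.
Proof.
  pose proof a_sq. unfold Qr, b.
  replace ((a * z1) * (a * z1) + 2 * l * (a * z1) * ((r - l * a) * z1 + z2) + ((r - l * a) * z1 + z2) * ((r - l * a) * z1 + z2))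
    with ((a * a * (1 - l * l)) * (z1 * z1) + r * r * (z1 * z1) + 2 * r * z1 * z2 + z2 * z2) by ring.
  rewrite H. ring.
Qed.

Lemma stat_compare z1 z2 c :
  chibar_stat (inv2 (Mrho l)) (a * z1) (b * z1 + z2) <= c -> chibar_stat (inv2 (Mrho r)) z1 z2 <= c.
Proof.
  rewrite !stat_le_iff by auto. intros H t1 t2 [Ht1 [Ht2 Ht]].
  pose proof a_pos. pose proof b_nonneg.
  assert (HL : LambdaPlus (a * t1) (b * t1 + t2)).
  { unfold LambdaPlus. split; [nra|split; [nra|]].
    destruct (Rle_or_lt t1 0). assert (t1 = 0) by lra. subst t1. lra. nra. }
  specialize (H _ _ HL).
  replace (a * z1 - a * t1) with (a * (z1 - t1)) in H by ring.
  replace (b * z1 + z2 - (b * t1 + t2)) with (b * (z1 - t1) + (z2 - t2)) in H by ring.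
  rewrite !Q_transf in H. exact H.
Qed.

Lemma dens_transf z1 z2 :
  a * gauss_dens (inv2 (Mrho l)) (a * z1) (b * z1 + z2) = gauss_dens (inv2 (Mrho r)) z1 z2.
Proof.
  rewrite !gauss_M by auto. rewrite Q_transf.
  assert (a * sqrt (1 - l * l) = sqrt (1 - r * r)).
  { unfold a. field. apply Rgt_not_eq. apply sqrt_lt_R0. nra. }
  rewrite <- H. field. pose proof PI_RGT_0. lra.
Qed.

Lemma gauss_nonneg r0 x1 x2 : -1 < r0 < 1 -> 0 <= gauss_dens (inv2 (Mrho r0)) x1 x2.
Proof.
  intros. rewrite gauss_M by auto. apply Rmult_le_pos; [|left; apply exp_pos].
  unfold Rdiv. apply Rmult_le_pos. apply sqrt_pos. left. apply Rinv_0_lt_compat. pose proof PI_RGT_0; lra.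
Qed.

Lemma cdf_compare c pl pr :
  chibar_cdf (inv2 (Mrho l)) c pl -> chibar_cdf (inv2 (Mrho r)) c pr -> pl <= pr.
Proof.
  intros [gl [Hgl1 Hgl2]] [gr [Hgr1 Hgr2]].
  pose proof a_pos as Ha.
  apply improper_iff in Hgl2. apply improper_iff in Hgr2.
  apply (imp_le (fun z1 => a * gl (a * z1)) gr pl pr).
  - apply imp_scal_arg; auto.
  - exact Hgr2.
  - intros z1.
    pose proof (Hgl1 (a * z1)) as H1. apply improper_iff in H1.
    pose proof (imp_scal _ _ a (imp_shift _ _ (b * z1) H1)) as H2.
    pose proof (Hgr1 z1) as H3. apply improper_iff in H3.
    apply (imp_le _ _ _ _ H2 H3). intros z2. cbv beta.
    rewrite (Rplus_comm z2 (b * z1)).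
    rewrite <- Rmult_assoc, (Rmult_comm a), Rmult_assoc, dens_transf.
    apply Rmult_le_compat_r. apply gauss_nonneg; auto.
    unfold indic. destruct (excluded_middle_informative (chibar_stat (inv2 (Mrho l)) (a * z1) (b * z1 + z2) <= c)) as [E1|E1];
    destruct (excluded_middle_informative (chibar_stat (inv2 (Mrho r)) z1 z2 <= c)) as [E2|E2]; try lra.
    exfalso. apply E2. apply stat_compare; auto.
Qed.

End Compare.

Theorem mainTheorem8 :
  forall (l u alpha : R),
    -1 < l -> l <= u -> u < 1 -> 0 < alpha < 1 ->
    forall (cl : R), is_quantile (inv2 (Mrho l)) alpha cl ->
    forall (rho c : R), l <= rho <= u ->
      is_quantile (inv2 (Mrho rho)) alpha c -> c <= cl.
Proof.
  intros l u alpha Hl Hlu Hu Ha cl Hcl rho c Hrho Hc.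
  destruct Hcl as [Hlb_l Hgl_l]. destruct Hc as [Hlb_r Hgl_r].
  apply Hgl_l. intros x [pl [Hcdf_l Hp]].
  assert (Hr : -1 < rho < 1) by lra.
  destruct (cdf_exists rho x Hr) as [pr Hcdf_r].
  apply Hlb_r. exists pr. split; auto.
  pose proof (cdf_compare l rho ltac:(lra) Hr ltac:(lra) x pl pr Hcdf_l Hcdf_r). lra.
Qed.
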